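(* Let $M\subset\mathbb C^{n+d}$ be a generic real submanifold through $0$ given locally by $\Re e\, w_j={}^t\bar zA_jz+O(3)$, $j=1,\dots,d$ (with $A_j$ Hermitian $n\times n$, and $z$, $\Im m\, w$ of weights one and two in the remainder), strongly Levi nondegenerate at $0$. Let $b\in\mathbb R^d$ with $\sum_jb_jA_j$ invertible and let $a\in\mathbb C^d$ be sufficiently small. If $M$ is $\mathfrak D(a)$-nondegenerate at $0$, then there exists $V\in\mathbb C^n$ such that $M$ is stationary minimal at $0$ for $(a,b-a-\overline a,V)$.
   Context: Strongly Levi nondegenerate at $0$: some real combination $\sum_jc_jA_j$ is invertible. Set $P=\sum_ja_jA_j$, $A=\sum_j(b_j-a_j-\overline{a_j})A_j$ (invertible for $a$ small) and let $X$ be the unique $n\times n$ solution with $\|X\|<1$ of $PX^2+AX+{}^t\overline P=0$. $M$ is $\mathfrak D(a)$-nondegenerate at $0$ if there exists $V\in\mathbb C^n$ such that the real $d\times d$ matrix $\Re e\big(\sum_{r=0}^\infty{}^t\overline V\,{}^t\overline X^{\,r}A_jA^{-1}A_sX^rV\big)_{j,s}$ is nondegenerate. $M$ is stationary minimal at $0$ for $(a,b-a-\overline a,V)$ if $A_1,\dots,A_d$ restricted to $\mathrm{span}_{\mathbb R}\{V,XV,X^2V,\dots\}$ are $\mathbb R$-linearly independent, i.e. $\lambda\in\mathbb R^d$ and $\sum_j\lambda_jA_jX^kV=0$ for all $k\ge0$ imply $\lambda=0$. *)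

(* Defs.v *)
From HB Require Import structures.
From mathcomp Require Import all_boot all_order all_algebra.
From mathcomp Require Import all_classical all_reals all_analysis.
From mathcomp Require Import complex.
Set Implicit Arguments. Unset Strict Implicit. Unset Printing Implicit Defensive.
Import Order.TTheory GRing.Theory Num.Theory.
Local Open Scope ring_scope.

Section Defs.
Variable R : realType.
Local Notation C := R[i].

Definition adjmx m p (M : 'M[C]_(m, p)) : 'M[C]_(p, m) := (map_mx (@conjc R) M)^T.

Definition hermitian_mx n (M : 'M[C]_n) : Prop := adjmx M = M.

Definition cR (x : R) : C := Complex x 0.

Definition cre (z : C) : R := complex.Re z.
Definition cim (z : C) : R := complex.Im z.

Definition rcomb n d (A : 'I_d -> 'M[C]_n) (c : 'I_d -> R) : 'M[C]_n :=
  \sum_(j < d) cR (c j) *: A j.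

Definition ccomb n d (A : 'I_d -> 'M[C]_n) (a : 'I_d -> C) : 'M[C]_n :=
  \sum_(j < d) a j *: A j.

Definition strongly_Levi_nondeg n d (A : 'I_d -> 'M[C]_n) : Prop :=
  exists c : 'I_d -> R, rcomb A c \in unitmx.

Definition vnorm2 n (v : 'cV[C]_n) : R :=
  \sum_(i < n) (cre (v i 0) ^+ 2 + cim (v i 0) ^+ 2).

Definition opnorm_lt1 n (X : 'M[C]_n) : Prop :=
  exists c : R, 0 <= c /\ c < 1 /\
    forall v : 'cV[C]_n, vnorm2 (X *m v) <= c ^+ 2 * vnorm2 v.

Definition Pmat n d (A : 'I_d -> 'M[C]_n) (a : 'I_d -> C) := ccomb A a.
Definition Amat n d (A : 'I_d -> 'M[C]_n) (a : 'I_d -> C) (b : 'I_d -> R) :=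
  ccomb A (fun j => cR (b j) - a j - conjc (a j)).

Definition solves_quad n (P Am X : 'M[C]_n) : Prop :=
  P *m (X *m X) + Am *m X + adjmx P = 0.

Definition Dmatrix n d (A : 'I_d -> 'M[C]_n) (Am X : 'M[C]_n) (V : 'cV[C]_n)
  : 'M[R]_d :=
  \matrix_(j < d, s < d)
    limn (fun N : nat => \sum_(0 <= r < N)
       cre ((adjmx V *m adjmx (X ^+ r) *m A j *m invmx Am *m A s *m (X ^+ r) *m V)
             ord0 ord0)).

Definition Da_nondegenerate n d (A : 'I_d -> 'M[C]_n) (Am X : 'M[C]_n) : Prop :=
  exists V : 'cV[C]_n, Dmatrix A Am X V \in unitmx.

Definition stationary_minimal n d (A : 'I_d -> 'M[C]_n) (X : 'M[C]_n)
  (V : 'cV[C]_n) : Prop :=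
  forall lam : 'I_d -> R,
    (forall k : nat, \sum_(j < d) cR (lam j) *: (A j *m (X ^+ k) *m V) = 0) ->
    forall j, lam j = 0.

End Defs.

(* Main.v *)
Require Import Defs.
From HB Require Import structures.
From mathcomp Require Import all_boot all_order all_algebra.
From mathcomp Require Import all_classical all_reals all_analysis.
From mathcomp Require Import complex.
From mathcomp Require Import ring lra.
Import Order.TTheory GRing.Theory Num.Theory.
Import numFieldNormedType.Exports.
Local Open Scope ring_scope.
Local Open Scope classical_set_scope.

Section H.
Variable R : realType.
Local Notation C := R[i].
Definition nm2 (z : C) : R := cre z ^+ 2 + cim z ^+ 2.

Lemma creD (x y : C) : cre (x + y) = cre x + cre y.
Proof. by case: x; case: y. Qed.
Lemma cre0 : cre (0 : C) = 0. Proof. by []. Qed.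
Lemma cre_sum I (r : seq I) (P : pred I) (F : I -> C) :
  cre (\sum_(i <- r | P i) F i) = \sum_(i <- r | P i) cre (F i).
Proof. by elim/big_rec2: _ => // i y1 y2 _ <-; rewrite creD. Qed.
Lemma creM (l : R) (z : C) : cre (cR l * z) = l * cre z.
Proof. case: z => a b; rewrite /cre /cR /=; ring. Qed.

Lemma cre_bound (z m w : C) :
  `|cre (conjc z * m * w)| <= (nm2 m + 1) * (nm2 z + nm2 w) / 2.
Proof.
case: z => z1 z2; case: m => m1 m2; case: w => w1 w2.
rewrite /nm2 /cre /cim /=.
set u1 := z1 * m1 + z2 * m2; set u2 := z1 * m2 - z2 * m1.
have -> : (z1 * m1 - - z2 * m2) * w1 - (z1 * m2 + - z2 * m1) * w2 = u1 * w1 - u2 * w2.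
  rewrite /u1 /u2; ring.
have hu : u1 ^+ 2 + u2 ^+ 2 = (z1 ^+ 2 + z2 ^+ 2) * (m1 ^+ 2 + m2 ^+ 2) by rewrite /u1 /u2; ring.
have h1 : 0 <= (u1 - w1) ^+ 2 + (u2 + w2) ^+ 2 by rewrite addr_ge0 // sqr_ge0.
have h2 : 0 <= (u1 + w1) ^+ 2 + (u2 - w2) ^+ 2 by rewrite addr_ge0 // sqr_ge0.
have hz : 0 <= z1 ^+ 2 + z2 ^+ 2 by rewrite addr_ge0 // sqr_ge0.
have hw : 0 <= w1 ^+ 2 + w2 ^+ 2 by rewrite addr_ge0 // sqr_ge0.
have hm : 0 <= m1 ^+ 2 + m2 ^+ 2 by rewrite addr_ge0 // sqr_ge0.
rewrite ler_norml; apply/andP; split; nra.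
Qed.

Lemma adjmx_mul m p q (P : 'M[C]_(m, p)) (Q : 'M[C]_(p, q)) :
  adjmx (P *m Q) = adjmx Q *m adjmx P.
Proof. by rewrite /adjmx map_mxM trmx_mul. Qed.

Lemma entry_expand n (w : 'cV[C]_n) (M : 'M[C]_n) :
  (adjmx w *m M *m w) ord0 ord0 =
  \sum_(k < n) \sum_(i < n) conjc (w i ord0) * M i k * w k ord0.
Proof.
rewrite mxE; apply: eq_bigr => k _; rewrite mxE big_distrl /=.
by apply: eq_bigr => i _; rewrite /adjmx !mxE.
Qed.

Lemma nm2_ge0 (z : C) : 0 <= nm2 z.
Proof. by rewrite /nm2 addr_ge0 // sqr_ge0. Qed.

Lemma vnorm2E n (w : 'cV[C]_n) : vnorm2 w = \sum_(i < n) nm2 (w i ord0).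
Proof. by []. Qed.

Lemma vnorm2_ge0 n (w : 'cV[C]_n) : 0 <= vnorm2 w.
Proof. by rewrite vnorm2E sumr_ge0 // => i _; apply: nm2_ge0. Qed.

Lemma nm2_le_vnorm2 n (w : 'cV[C]_n) i : nm2 (w i ord0) <= vnorm2 w.
Proof.
rewrite vnorm2E (bigD1 i) //= lerDl sumr_ge0 // => k _; exact: nm2_ge0.
Qed.

Lemma term_bound n (w : 'cV[C]_n) (M : 'M[C]_n) :
  `|cre ((adjmx w *m M *m w) ord0 ord0)| <=
  (\sum_(k < n) \sum_(i < n) (nm2 (M i k) + 1)) * vnorm2 w.
Proof.
rewrite entry_expand cre_sum.
apply: le_trans (ler_norm_sum _ _ _) _.
rewrite mulr_suml; apply: ler_sum => k _.
rewrite cre_sum; apply: le_trans (ler_norm_sum _ _ _) _.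
rewrite mulr_suml; apply: ler_sum => i _.
apply: le_trans (cre_bound _ _ _) _.
have h1 := @nm2_le_vnorm2 _ w i; have h2 := @nm2_le_vnorm2 _ w k.
have h3 := nm2_ge0 (M i k); have h4 := nm2_ge0 (w i ord0); have h5 := nm2_ge0 (w k ord0).
nra.
Qed.

Lemma vnorm2_pow n (X : 'M[C]_n) (c : R) (V : 'cV[C]_n) :
  0 <= c -> (forall v : 'cV[C]_n, vnorm2 (X *m v) <= c ^+ 2 * vnorm2 v) ->
  forall r, vnorm2 (X ^+ r *m V) <= (c ^+ 2) ^+ r * vnorm2 V.
Proof.
move=> c0 HX; elim => [|r IH]; first by rewrite expr0 mul1r mul1mx.
rewrite exprS -mulmxE -mulmxA exprS -mulrA.
apply: le_trans (HX _) _; rewrite ler_wpM2l // sqr_ge0 //.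
Qed.

Lemma conv_series n (X M : 'M[C]_n) (V : 'cV[C]_n) : opnorm_lt1 X ->
  cvgn (fun N : nat => \sum_(0 <= r < N)
     cre ((adjmx V *m adjmx (X ^+ r) *m M *m (X ^+ r) *m V) ord0 ord0)).
Proof.
move=> [c [c0 [c1 HX]]].
set t := fun r : nat => cre ((adjmx V *m adjmx (X ^+ r) *m M *m (X ^+ r) *m V) ord0 ord0).
have -> : (fun N : nat => \sum_(0 <= r < N)
     cre ((adjmx V *m adjmx (X ^+ r) *m M *m (X ^+ r) *m V) ord0 ord0)) = series t by [].
apply: normed_cvg.
set K := \sum_(k < n) \sum_(i < n) (nm2 (M i k) + 1).
have K0 : 0 <= K by rewrite sumr_ge0 // => k _; rewrite sumr_ge0 // => i _; rewrite addr_ge0 // nm2_ge0.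
have : `|c ^+ 2| < 1.
  by rewrite ger0_norm ?sqr_ge0 // expr_lt1 // c0.
move/(@is_cvg_geometric_series R (K * vnorm2 V)).
apply: series_le_cvg => r.
- exact: normr_ge0.
- by rewrite /geometric /= mulr_ge0 // ?exprn_ge0 ?sqr_ge0 // mulr_ge0 // vnorm2_ge0.
rewrite /t /geometric /= -adjmx_mul -!mulmxA mulmxA mulmxA.
rewrite -(mulmxA _ (X ^+ r) V).
apply: le_trans (term_bound _ _ _) _.
rewrite -mulrA ler_wpM2l // mulrC.
exact: vnorm2_pow.
Qed.
End H.

Theorem lemma4p7 (R : realType) (n d : nat) (A : 'I_d -> 'M[R[i]]_n) :
  (forall j, hermitian_mx (A j)) ->
  strongly_Levi_nondeg A ->
  forall b : 'I_d -> R, rcomb A b \in unitmx ->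
  exists eps : R, 0 < eps /\
    forall a : 'I_d -> R[i],
      (forall j, cre (a j) ^+ 2 + cim (a j) ^+ 2 < eps ^+ 2) ->
      forall X : 'M[R[i]]_n,
        opnorm_lt1 X ->
        solves_quad (Pmat A a) (Amat A a b) X ->
        Da_nondegenerate A (Amat A a b) X ->
        exists V : 'cV[R[i]]_n, stationary_minimal A X V.
Proof.
move=> _ _ b _; exists 1; split => // a _ X HX _ [V HD]; exists V => lam Hlam.
set Am := Amat A a b.
set D := Dmatrix A Am X V.
set u := fun (j s : 'I_d) (N : nat) => \sum_(0 <= r < N)
       cre ((adjmx V *m adjmx (X ^+ r) *m A j *m invmx Am *m A s *m (X ^+ r) *m V)
             ord0 ord0).
have cv : forall j s, u j s @ \oo --> (D j s : R).
  move=> j s; rewrite /D /Dmatrix mxE.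
  have E : u j s = (fun N : nat => \sum_(0 <= r < N)
     cre ((adjmx V *m adjmx (X ^+ r) *m (A j *m invmx Am *m A s) *m (X ^+ r) *m V) ord0 ord0)).
    by apply/funext => N; apply: eq_bigr => r _; rewrite !mulmxA.
  have := @conv_series R n X (A j *m invmx Am *m A s) V HX.
  by rewrite -E.
have zero : forall j, \sum_(s < d) D j s * lam s = 0.
  move=> j.
  have H : (fun N => \sum_(s < d) u j s N * lam s) @ \oo --> \sum_(s < d) D j s * lam s.
    apply: (@cvg_big _ _ +%R 0 xpredT _ _ _ _ (fun s N => u j s N * lam s)) => //.
      exact: add_continuous.
    by move=> s _; apply: cvgMl; apply: cv.
  have E : (fun N => \sum_(s < d) u j s N * lam s) = (fun _ => 0).
    apply/funext => N; rewrite /u.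
    under eq_bigr do rewrite mulr_suml.
    rewrite exchange_big /=; apply: big1 => r _.
    transitivity (cre (\sum_(s < d) cR (lam s) *
       (adjmx V *m adjmx (X ^+ r) *m A j *m invmx Am *m A s *m X ^+ r *m V) ord0 ord0)).
      by rewrite cre_sum; apply: eq_bigr => s _; rewrite creM mulrC.
    set P := adjmx V *m adjmx (X ^+ r) *m A j *m invmx Am.
    transitivity (cre ((P *m \sum_(s < d) cR (lam s) *: (A s *m X ^+ r *m V)) ord0 ord0)).
      congr cre; rewrite mulmx_sumr summxE; apply: eq_bigr => s _.
      by rewrite -scalemxAr [RHS]mxE !mulmxA.
    by rewrite Hlam mulmx0 mxE.
  rewrite E in H.
  exact: (@cvg_unique _ (@Rhausdorff R) _ _ _ _ H (cvg_cst 0)).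
set lc : 'cV[R]_d := \col_s lam s.
have Dl : D *m lc = 0.
  apply/matrixP => j k; rewrite [LHS]mxE [RHS]mxE; apply: etrans (zero j).
  apply: eq_bigr => s _.
  by congr (_ * _); rewrite /lc mxE.
move=> j.
have : lc = 0 by rewrite -(mulKmx HD lc) Dl mulmx0.
by move/matrixP/(_ j ord0); rewrite !mxE.
Qed.
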